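(* Let $U$ be an $n\times n$ unitary matrix. Suppose $W$ is an $n\times n$ unitary matrix such that $U = W U' W^*$, where $$U' = \operatorname{diag}\Big( \begin{bmatrix}\xi_1 I_{n_1} & 0\\ 0 & \overline{\xi_1} I_{n_1}\end{bmatrix}, \ldots, \begin{bmatrix}\xi_d I_{n_d} & 0\\ 0 & \overline{\xi_d} I_{n_d}\end{bmatrix}, \begin{bmatrix} I_\ell & 0\\ 0 & -I_k\end{bmatrix}\Big),$$ with $n_1,\dots,n_d\ge 1$, $\ell,k\ge 0$, $2n_1+\cdots+2n_d+\ell+k = n$, and $\xi_1,\dots,\xi_d \in \mathbb{T}\setminus\{1,-1\}$ such that $\xi_1,\dots,\xi_d,\overline{\xi_1},\dots,\overline{\xi_d}$ are pairwise distinct (blocks $I_\ell$ or $-I_k$ are absent when $\ell=0$ or $k=0$). Then every conjugation $C$ on $\mathbb{C}^n$ with $CUC = U$ has the form $$C = W\, \operatorname{diag}\Big( \begin{bmatrix} 0 & V_1\\ V_1^t & 0\end{bmatrix}, \ldots, \begin{bmatrix} 0 & V_d\\ V_d^t & 0\end{bmatrix}, \begin{bmatrix} Q_\ell & 0\\ 0 & Q_k\end{bmatrix}\Big)\, J\, W^*,$$ where each $V_j$ is an $n_j\times n_j$ unitary matrix, $Q_\ell$ and $Q_k$ are $\ell\times\ell$ and $k\times k$ unitary matrices with $Q_\ell^t = Q_\ell$ and $Q_k^t = Q_k$ (absent when $\ell=0$, resp. $k=0$), and $J$ is the conjugation on $\mathbb{C}^n$ given by $J[x_1,\dots,x_n]^t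 = [\overline{x_1},\dots,\overline{x_n}]^t$.
   Context: A conjugation on $\mathbb{C}^n$ is an antilinear, isometric map $C$ with $C^2=I$. $I_m$ denotes the $m\times m$ identity matrix, $^t$ denotes transpose, $\mathbb{T}$ is the unit circle, and $\operatorname{diag}(\cdot)$ denotes a block diagonal matrix. *)

(* Defs.v *)
From HB Require Import structures.
From mathcomp Require Import all_boot all_order all_algebra sesquilinear spectral.
Set Implicit Arguments. Unset Strict Implicit. Unset Printing Implicit Defensive.
Import Order.TTheory GRing.Theory Num.Theory.
Local Open Scope ring_scope.

Definition Jmap (C : numClosedFieldType) n (x : 'cV[C]_n) : 'cV[C]_n := map_mx Num.conj x.

Definition cnorm2 (C : numClosedFieldType) n (x : 'cV[C]_n) : C :=
  \sum_(i < n) `|x i 0| ^+ 2.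

Definition conjugation (C : numClosedFieldType) n (f : 'cV[C]_n -> 'cV[C]_n) : Prop :=
  [/\ (forall (a : C) (x y : 'cV[C]_n), f (a *: x + y) = a^* *: f x + f y),
      (forall x, cnorm2 (f x) = cnorm2 x) &
      (forall x, f (f x) = x)].

Definition Uprime (C : numClosedFieldType) (d : nat) (nn : 'I_d -> nat) (xi : 'I_d -> C)
    (l k : nat) : 'M[C]_(\sum_(j < d) (nn j + nn j) + (l + k)) :=
  block_mx (\mxdiag_(j < d) block_mx ((xi j)%:M : 'M_(nn j)) 0 0 (((xi j)^*)%:M : 'M_(nn j)))
           0 0
           (block_mx (1%:M : 'M_l) 0 0 ((-1)%:M : 'M_k)).

Definition Dmx (C : numClosedFieldType) (d : nat) (nn : 'I_d -> nat)
    (V : forall j : 'I_d, 'M[C]_(nn j)) (l k : nat) (Ql : 'M[C]_l) (Qk : 'M[C]_k)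
    : 'M[C]_(\sum_(j < d) (nn j + nn j) + (l + k)) :=
  block_mx (\mxdiag_(j < d) block_mx (0 : 'M_(nn j)) (V j) (V j)^T 0)
           0 0
           (block_mx Ql 0 0 Qk).

(* Main.v *)
Require Import Defs.
From HB Require Import structures.
From mathcomp Require Import all_boot all_order all_algebra sesquilinear spectral.
Import Order.TTheory GRing.Theory Num.Theory.
Local Open Scope ring_scope.
Local Open Scope sesquilinear_scope.
Set Implicit Arguments. Unset Strict Implicit. Unset Printing Implicit Defensive.
Local Notation cj A := (map_mx Num.conj A).
Section Aux.
Variable C : numClosedFieldType.

Lemma antilin_rep n (f : 'cV[C]_n -> 'cV[C]_n) :
  (forall a x y, f (a *: x + y) = a^* *: f x + f y) ->
  exists A : 'M[C]_n, forall x, f x = A *m cj x.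
Proof.
move=> fl.
have f0 : f 0 = 0.
  have h := fl 1 0 0; rewrite scale1r addr0 conjC1 scale1r in h.
  by apply: (addrI (f 0)); rewrite addr0 -h.
have fZ a x : f (a *: x) = a^* *: f x by rewrite -[a *: x]addr0 fl f0 addr0.
have fD x y : f (x + y) = f x + f y.
  by have := fl 1 x y; rewrite scale1r conjC1 scale1r.
exists (\matrix_(i, j) f (delta_mx j 0) i 0); move=> x.
rewrite {1}[x]matrix_sum_delta (big_morph f fD f0).
apply/matrixP => i j; rewrite ord1 summxE !mxE; apply: eq_bigr => a _.
by rewrite big_ord1 fZ !mxE mulrC.
Qed.

Lemma mx_ext n (P Q : 'M[C]_n) : (forall x : 'cV_n, P *m x = Q *m x) -> P = Q.
Proof.
move=> h; apply/matrixP => i j; have := congr1 (fun v : 'cV[C]_n => v i 0) (h (delta_mx j 0)).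
by rewrite -!colE !mxE.
Qed.

Lemma conjK m n (A : 'M[C]_(m, n)) : cj (cj A) = A.
Proof. by apply/matrixP => i j; rewrite !mxE conjCK. Qed.

Lemma cjM m n p (A : 'M[C]_(m, n)) (B : 'M[C]_(n, p)) : cj (A *m B) = cj A *m cj B.
Proof. exact: map_mxM. Qed.

Lemma cnorm2E n (x : 'cV[C]_n) : cnorm2 x = (x^t* *m x) 0 0.
Proof.
rewrite /cnorm2 !mxE; apply: eq_bigr => i _; by rewrite !mxE normCK mulrC.
Qed.

Lemma deltaC n (i : 'I_n) : (delta_mx i 0 : 'cV[C]_n)^t* = delta_mx 0 i.
Proof. by apply/matrixP => a b; rewrite !mxE conjC_nat andbC. Qed.

Lemma quad0 n (H : 'M[C]_n) :
  (forall y : 'cV_n, (y^t* *m H *m y) 0 0 = 0) -> H = 0.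
Proof.
move=> h.
pose B (u v : 'cV[C]_n) := (u^t* *m H *m v) 0 0.
have tC (u v : 'cV[C]_n) c : (u + c *: v)^t* = u^t* + c^* *: v^t*.
  by apply/matrixP => ? ?; rewrite !mxE rmorphD rmorphM.
have E u v c : B (u + c *: v) (u + c *: v) =
    B u u + c * B u v + c^* * B v u + c^* * c * B v v.
  rewrite /B tC !mulmxDl !mulmxDr -!scalemxAl -!scalemxAr !mxE.
  by rewrite !mulrA !addrA.
have Be i j : B (delta_mx i 0) (delta_mx j 0) = H i j.
  by rewrite /B deltaC -rowE -colE !mxE.
apply/matrixP => i j; rewrite mxE.
have hii : B (delta_mx i 0) (delta_mx i 0) = 0 := h _.
have hjj : B (delta_mx j 0) (delta_mx j 0) = 0 := h _.
have h1 : B (delta_mx i 0 + 1 *: delta_mx j 0) (delta_mx i 0 + 1 *: delta_mx j 0) = 0 := h _.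
have h2 : B (delta_mx i 0 + 'i *: delta_mx j 0) (delta_mx i 0 + 'i *: delta_mx j 0) = 0 := h _.
rewrite E !Be in h1; rewrite E !Be in h2; rewrite Be in hii; rewrite Be in hjj.
rewrite hii hjj !mulr0 addr0 add0r conjC1 !mul1r in h1.
rewrite hii hjj !mulr0 addr0 add0r conjCi in h2.
have e1 : H j i = - H i j by apply/eqP; rewrite -addr_eq0 addrC h1.
rewrite e1 mulrN mulNr opprK -mulrDr in h2.
move/eqP: h2; rewrite mulf_eq0 (negbTE (neq0Ci C)) /= -mulr2n mulrn_eq0 /=.
by move/eqP.
Qed.
Lemma scal_sylv m n (X : 'M[C]_(m, n)) a b :
  a%:M *m X = X *m b%:M -> a != b -> X = 0.
Proof.
rewrite mul_scalar_mx mul_mx_scalar => /eqP; rewrite -subr_eq0 -scalerBl.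
by rewrite scaler_eq0 subr_eq0 => /orP[/eqP-> /eqP//|/eqP].
Qed.

Lemma blk_sylv m1 m2 n1 n2 (P1 : 'M[C]_m1) (P2 : 'M[C]_m2) (Q1 : 'M[C]_n1)
    (Q2 : 'M[C]_n2) (X : 'M[C]_(m1 + m2, n1 + n2)) :
  block_mx P1 0 0 P2 *m X = X *m block_mx Q1 0 0 Q2 ->
  [/\ P1 *m ulsubmx X = ulsubmx X *m Q1, P1 *m ursubmx X = ursubmx X *m Q2,
      P2 *m dlsubmx X = dlsubmx X *m Q1 & P2 *m drsubmx X = drsubmx X *m Q2].
Proof.
rewrite -{1 2}[X]submxK !mulmx_block => /eq_block_mx[].
by rewrite !(mul0mx, mulmx0, addr0, add0r)...
Qed.

Lemma diag_sylv_blk d (p : 'I_d -> nat) (P Q : forall i, 'M[C]_(p i))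
    (X : 'M[C]_(\sum_i p i)) :
  \mxdiag_i P i *m X = X *m \mxdiag_i Q i ->
  forall i j, P i *m submxblock X i j = submxblock X i j *m Q j.
Proof.
rewrite -{1 2}[X]submxblockK mul_mxdiag_mxblock mul_mxblock_mxdiag.
by move/eq_mxblockP.
Qed.

Lemma diag_sylv_col d (p : 'I_d -> nat) (P : forall i, 'M[C]_(p i)) n
    (Q : 'M[C]_n) (X : 'M[C]_(\sum_i p i, n)) :
  \mxdiag_i P i *m X = X *m Q ->
  forall i, P i *m submxcol X i = submxcol X i *m Q.
Proof.
rewrite -{1 2}[X]submxcolK mul_mxdiag_mxcol mxcol_mul.
by move/eq_mxcolP.
Qed.

Lemma diag_sylv_row d (p : 'I_d -> nat) (Q : forall i, 'M[C]_(p i)) n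
    (P : 'M[C]_n) (X : 'M[C]_(n, \sum_i p i)) :
  P *m X = X *m \mxdiag_i Q i ->
  forall i, P *m submxrow X i = submxrow X i *m Q i.
Proof.
rewrite -{1 2}[X]submxrowK mul_mxrow_mxdiag mul_mxrow.
by move/eq_mxrowP.
Qed.

Lemma map_mxdiag d (p : 'I_d -> nat) (P : forall i, 'M[C]_(p i)) :
  cj (\mxdiag_i P i) = \mxdiag_i cj (P i).
Proof.
rewrite /mxdiag; apply/matrixP => a b; rewrite !mxE.
have [e|ne] := eqVneq (tagnat.sig1 a) (tagnat.sig1 b).
  by move: (tagnat.sig2 b); rewrite -e => y; rewrite !conform_mx_id mxE.
by rewrite !mxE conjC0.
Qed.

Lemma mul_mxdiag d (p : 'I_d -> nat) (P Q : forall i, 'M[C]_(p i)) :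
  \mxdiag_i P i *m \mxdiag_i Q i = \mxdiag_i (P i *m Q i).
Proof.
rewrite {1}/mxdiag mul_mxblock_mxdiag /mxdiag; apply: eq_mxblock => i j.
have [e|ne] := eqVneq i j; last by rewrite mul0mx.
by subst j; rewrite !conform_mx_id.
Qed.

Lemma blk0 m1 m2 n1 n2 (X : 'M[C]_(m1 + m2, n1 + n2)) :
  ulsubmx X = 0 -> ursubmx X = 0 -> dlsubmx X = 0 -> drsubmx X = 0 -> X = 0.
Proof. by move=> h1 h2 h3 h4; rewrite -[X]submxK h1 h2 h3 h4 block_mx0. Qed.

Lemma one_neqN1 : (1 : C) != -1.
Proof. by rewrite -subr_eq0 opprK -mulr2n mulrn_eq0 oner_eq0. Qed.

Lemma conj_neq (a b : C) : a != b -> a^* != b^*.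
Proof. by apply: contra => /eqP h; rewrite -[a]conjCK h conjCK. Qed.

Lemma structure d (nn : 'I_d -> nat) (xi : 'I_d -> C) (l k : nat)
  (M : 'M[C]_(\sum_(j < d) (nn j + nn j) + (l + k))) :
  (forall j, xi j != 1 /\ xi j != -1) ->
  (forall i j, i != j -> xi i != xi j) ->
  (forall i j, i != j -> (xi i)^* != (xi j)^*) ->
  (forall i j, xi i != (xi j)^*) ->
  Uprime nn xi l k *m M = M *m cj (Uprime nn xi l k) ->
  exists (X Y : forall j, 'M[C]_(nn j)) (Q1 : 'M[C]_l) (Q2 : 'M[C]_k),
    M = block_mx (\mxdiag_j block_mx 0 (X j) (Y j) 0) 0 0 (block_mx Q1 0 0 Q2).
Proof.
move=> hx1 hxi hxc hxx.
have cU : cj (Uprime nn xi l k) = block_mx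
   (\mxdiag_j block_mx ((xi j)^*%:M : 'M_(nn j)) 0 0 ((xi j)%:M : 'M_(nn j))) 0 0
   (block_mx (1%:M : 'M_l) 0 0 ((-1)%:M : 'M_k)).
  rewrite /Uprime map_block_mx map_mxdiag !map_mx0 map_block_mx !map_mx0.
  rewrite !map_scalar_mx rmorph1 rmorphN1; congr block_mx.
  by apply: eq_mxdiag => j; rewrite map_block_mx !map_mx0 !map_scalar_mx /= conjCK.
rewrite cU /Uprime => /blk_sylv[hA hB hC hD].
have n1 : forall j, (xi j)^* != 1.
  by move=> j; have := conj_neq (hx1 j).1; rewrite conjC1.
have nN1 : forall j, (xi j)^* != -1.
  by move=> j; have := conj_neq (hx1 j).2; rewrite rmorphN1.
have B0 : ursubmx M = 0.
  rewrite -[ursubmx M]submxcolK -[0 in RHS](mxcol0 (p_ := fun j => (nn j + nn j)%N)).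
  apply: eq_mxcol => i; have := diag_sylv_col hB i.
  move=> /blk_sylv[h1 h2 h3 h4]; apply: blk0.
  - by apply: scal_sylv h1 (hx1 i).1.
  - by apply: scal_sylv h2 (hx1 i).2.
  - by move/scal_sylv: h3 => -> //; exact: (n1 i).
  - by move/scal_sylv: h4 => -> //; exact: (nN1 i).
have C0 : dlsubmx M = 0.
  rewrite -[dlsubmx M]submxrowK -[0 in RHS](mxrow0 (q_ := fun j => (nn j + nn j)%N)).
  apply: eq_mxrow => i; have := diag_sylv_row hC i.
  move=> /blk_sylv[h1 h2 h3 h4]; apply: blk0.
  - by move/scal_sylv: h1 => -> //; rewrite eq_sym n1.
  - by move/scal_sylv: h2 => -> //; rewrite eq_sym (hx1 i).1.
  - by move/scal_sylv: h3 => -> //; rewrite eq_sym nN1.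
  - by move/scal_sylv: h4 => -> //; rewrite eq_sym (hx1 i).2.
have [D12 D21] : ursubmx (drsubmx M) = 0 /\ dlsubmx (drsubmx M) = 0.
  have /blk_sylv[_ h2 h3 _] := hD; split.
  - by move/scal_sylv: h2 => -> //; exact: one_neqN1.
  - by move/scal_sylv: h3 => -> //; rewrite eq_sym one_neqN1.
have hA' := diag_sylv_blk hA.
pose Xj j := ursubmx (submxblock (ulsubmx M) j j).
pose Yj j := dlsubmx (submxblock (ulsubmx M) j j).
exists Xj, Yj, (ulsubmx (drsubmx M)), (drsubmx (drsubmx M)).
rewrite -{1}[M]submxK B0 C0; congr block_mx; last first.
  by rewrite -{1}[drsubmx M]submxK D12 D21.
apply/mxblockP => i j; rewrite /mxdiag mxblockK.
have /blk_sylv[h1 h2 h3 h4] := hA' i j.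
have [e|ne] := eqVneq i j.
  subst j; rewrite conform_mx_id -[LHS]submxK /Xj /Yj; congr block_mx.
  - by move/scal_sylv: h1 => -> //; exact: (hxx i i).
  - by move/scal_sylv: h4 => -> //; rewrite eq_sym hxx.
apply: blk0.
- by move/scal_sylv: h1 => -> //; exact: (hxx i j).
- by move/scal_sylv: h2 => -> //; exact: (hxi i j ne).
- by move/scal_sylv: h3 => -> //; exact: (hxc i j ne).
- by move/scal_sylv: h4 => -> //; rewrite eq_sym hxx.
Qed.
End Aux.

Unset Implicit Arguments.
Set Strict Implicit.

Theorem theorem3p3 (C : numClosedFieldType) (d : nat) (nn : 'I_d -> nat)
    (xi : 'I_d -> C) (l k : nat)
    (U W : 'M[C]_(\sum_(j < d) (nn j + nn j) + (l + k))) :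
  (forall j, (0 < nn j)%N) ->
  (forall j, `|xi j| = 1) ->
  (forall j, xi j != 1 /\ xi j != -1) ->
  (forall i j, i != j -> xi i != xi j) ->
  (forall i j, i != j -> (xi i)^* != (xi j)^*) ->
  (forall i j, xi i != (xi j)^*) ->
  U \is unitarymx -> W \is unitarymx ->
  U = W *m Uprime nn xi l k *m W ^t* ->
  forall f : 'cV[C]_(\sum_(j < d) (nn j + nn j) + (l + k)) ->
             'cV[C]_(\sum_(j < d) (nn j + nn j) + (l + k)),
    conjugation f ->
    (forall x, f (U *m f x) = U *m x) ->
    exists (V : forall j : 'I_d, 'M[C]_(nn j)) (Ql : 'M[C]_l) (Qk : 'M[C]_k),
      [/\ (forall j, (V j) \is unitarymx),
          Ql \is unitarymx /\ Ql^T = Ql,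
          Qk \is unitarymx /\ Qk^T = Qk &
          forall x, f x = W *m Dmx V Ql Qk *m Jmap (W ^t* *m x)].
Proof.
move=> hn hab hx1 hxi hxc hxx hU hW hUW f [fl fnorm finv] fU.
have [A hA] := antilin_rep fl.
have AcA : A *m cj A = 1%:M.
  apply: mx_ext => x; rewrite mul1mx.
  by have := finv x; rewrite !hA cjM conjK mulmxA.
have cAA : cj A *m A = 1%:M by apply: mulmx1C.
have sub00 (X Y : 'M[C]_1) : (X - Y) 0 0 = X 0 0 - Y 0 0 by rewrite !mxE.
have AtA : A^t* *m A = 1%:M.
  apply/eqP; rewrite -subr_eq0; apply/eqP; apply: quad0 => y.
  have e : cnorm2 (A *m y) = cnorm2 y.
    have := fnorm (cj y); rewrite hA conjK => ->.
    by rewrite /cnorm2; apply: eq_bigr => i _; rewrite mxE norm_conjC.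
  rewrite !cnorm2E trmx_mul cjM in e.
  rewrite mulmxBr mulmx1 mulmxBl sub00 !mulmxA; apply/eqP; rewrite subr_eq0; apply/eqP.
  by rewrite !mulmxA in e; exact: e.
have AU : A \is unitarymx by apply/unitarymxP; apply: mulmx1C.
have hAU : A *m cj U = U *m A.
  have e : A *m cj U *m cj A = U.
    apply: mx_ext => x; have := fU x.
    by rewrite !hA !cjM conjK !mulmxA.
  by rewrite -[A *m cj U]mulmx1 -cAA mulmxA e.
have WWt : W *m W^t* = 1%:M by apply/unitarymxP.
have WtW : W^t* *m W = 1%:M by apply: mulmx1C.
have cjWW : cj W *m W^T = 1%:M by rewrite -[W^T]conjK -cjM WWt map_mx1.
pose M := W^t* *m A *m cj W.
have fE x : f x = W *m M *m Jmap (W^t* *m x).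
  rewrite hA /Jmap cjM conjK /M !mulmxA WWt mul1mx -(mulmxA A) cjWW mulmx1.
  done.
have MU : M \is unitarymx.
  by rewrite /M !mul_unitarymx ?trmxC_unitary ?conjC_unitary.
have McM : M *m cj M = 1%:M.
  rewrite /M !cjM !conjK !mulmxA -[W^t* *m A *m cj W *m W^T]mulmxA.
  by rewrite cjWW mulmx1 -(mulmxA (W^t*)) AcA mulmx1 WtW.
have hUp : Uprime nn xi l k = W^t* *m U *m W.
  by rewrite hUW !mulmxA WtW mul1mx -mulmxA WtW mulmx1.
have hM : Uprime nn xi l k *m M = M *m cj (Uprime nn xi l k).
  rewrite hUp /M !cjM !conjK !mulmxA -[W^t* *m U *m W *m W^t*]mulmxA WWt mulmx1.
  rewrite -[W^t* *m A *m cj W *m W^T]mulmxA cjWW mulmx1.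
  by rewrite -(mulmxA (W^t*) U) -hAU !mulmxA.
have [X [Y [Q1 [Q2 hMe]]]] := structure hx1 hxi hxc hxx hM.
have Mt : M^t* = cj M.
  by rewrite -[M^t*]mulmx1 -McM mulmxA (mulmx1C (unitarymxP MU)) mul1mx.
have MT : M^T = M by have := congr1 (fun Z => cj Z) Mt; rewrite !conjK.
rewrite hMe tr_block_mx !trmx0 tr_mxdiag tr_block_mx !trmx0 in MT.
move/eq_block_mx: MT => [/eq_mxdiagP hT _ _ /eq_block_mx[hQ1 _ _ hQ2]].
have hY j : Y j = (X j)^T.
  by have := hT j; rewrite tr_block_mx !trmx0 => /eq_block_mx[_ _ <- _].
rewrite hMe map_block_mx map_mxdiag !map_mx0 map_block_mx !map_mx0 mulmx_block in McM.
rewrite !(mulmx0, mul0mx, addr0, add0r) mul_mxdiag mulmx_block in McM.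
rewrite !(mulmx0, mul0mx, addr0, add0r) in McM.
rewrite [1%:M]scalar_mx_block -(mxdiagZ (p_ := fun j => (nn j + nn j)%N)) in McM.
rewrite [X in _ = block_mx _ _ _ X]scalar_mx_block in McM.
move/eq_block_mx: McM => [/eq_mxdiagP hD _ _ /eq_block_mx[hq1 _ _ hq2]].
exists X, Q1, Q2; split.
- move=> j; apply/unitarymxP; have := hD j.
  rewrite map_block_mx !map_mx0 mulmx_block !(mulmx0, mul0mx, addr0, add0r).
  rewrite [1%:M]scalar_mx_block => /eq_block_mx[h _ _ _].
  rewrite hY in h. exact h.
- by split => //; apply/unitarymxP; rewrite hQ1; exact hq1.
- by split => //; apply/unitarymxP; rewrite hQ2; exact hq2.
have MD : M = Dmx X Q1 Q2.
  by rewrite hMe /Dmx; under eq_mxdiag do rewrite hY.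
by move=> x; rewrite fE MD.
Qed.
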